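(* \textsc{Maintain-Matching} takes $O(\varepsilon\Delta)$ time per update and maintains a maximal matching $\mathcal{M}_N$ of size at least $\frac{|\overline{E(C)}|}{20\varepsilon\Delta}$, with high probability, throughout a phase.
   Context: $G$ is a fully dynamic graph with maximum degree at most $\Delta$, $0<\varepsilon<1$. During a phase, a vertex set $C$ (an almost-clique) is fixed, and with high probability every vertex of $C$ has at most $5\varepsilon\Delta$ non-neighbors in $C$ throughout the phase. $\overline{E(C)}$ is the set of non-edges (pairs of distinct vertices of $C$ not joined by an edge) and $\overline{E_C(w)}$ the non-edges of $C$ incident to $w$. At the start of the phase, $\mathcal{M}_N$ is a maximal matching in the graph $(C,\overline{E(C)})$, and an array matched$[\cdot]$ records which vertices are matched. \textsc{Maintain-Matching}$(u,v)$ for an update with $u,v\in C$: if $(u,v)$ is an edge insertion (a non-edge deletion), remove $(u,v)$ from $\overline{E(C)},\overline{E_C(u)},\overline{E_C(v)}$; if $(u,v)\in\mathcal{M}_N$, remove it and unmark $u,v$; then for each $w\in\{u,v\}$ that is unmatched, scan $\overline{E_C(w)}$ and, if some non-edge $(w,x)$ has $x$ unmatched, add $(w,x)$ to $\mathcal{M}_N$ and mark $w,x$. If $(u,v)$ is an edge deletion (a non-edge insertion), add $(u,v)$ to $\overline{E(C)},\overline{E_C(u)},\overline{E_C(v)}$, and if both $u,v$ are unmatched add $(u,v)$ to $\mathcal{M}_N$ and mark them. ''With high probability'' means with probability at least $1-1/\mathrm{poly}(n)$. *)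

(* Defs.v *)
From HB Require Import structures.
From mathcomp Require Import all_boot all_order all_algebra.
Set Implicit Arguments. Unset Strict Implicit. Unset Printing Implicit Defensive.
Import Order.TTheory GRing.Theory Num.Theory.

Section MaintainMatching.
Variable T : finType.

Definition simple_graph (g : rel T) : Prop :=
  (forall x, ~~ g x x) /\ (forall x y, g x y = g y x).

Definition max_deg_le (g : rel T) (Delta : nat) : Prop :=
  forall x, #|[set y | g x y]| <= Delta.

(* An update of the fully dynamic graph: [ins = true] is an edge insertion
   of (u,v), [ins = false] an edge deletion of (u,v). *)
Record upd := Upd { uins : bool; uu : T; uv : T }.

Definition graph_step (g : rel T) (a : upd) : rel T :=
  fun x y => if ((x == uu a) && (y == uv a)) || ((x == uv a) && (y == uu a))
             then uins a else g x y.

Definition graph_at (g0 : rel T) (us : seq upd) (k : nat) : rel T :=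
  foldl graph_step g0 (take k us).

Definition valid_upd (g : rel T) (a : upd) : bool :=
  (uu a != uv a) && (if uins a then ~~ g (uu a) (uv a) else g (uu a) (uv a)).

Definition nonedges (g : rel T) (C : {set T}) : {set {set T}} :=
  [set [set x; y] | x in C, y in C & (x != y) && ~~ g x y].

Definition nonnbrs (g : rel T) (C : {set T}) (w : T) : {set T} :=
  [set x in C | (x != w) && ~~ g w x].

Definition is_matching (M E : {set {set T}}) : Prop :=
  M \subset E /\
  (forall e f, e \in M -> f \in M -> e != f -> [disjoint e & f]).

Definition is_maximal_matching (M E : {set {set T}}) : Prop :=
  is_matching M E /\ (forall e, e \in E -> exists2 f, f \in M & ~~ [disjoint e & f]).

(* nel w : the list overline{E_C(w)} (stored as the list of other endpoints);
   mate w : Some x if (w,x) \in M_N, None if w is unmatched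
   (matched[w] = (mate w != None)). *)
Record state := State { nel : {ffun T -> seq T}; mate : {ffun T -> option T} }.

Definition matched (s : state) (w : T) : bool := mate s w != None.

Definition matchingE (s : state) : {set {set T}} :=
  [set [set p.1; p.2] | p : T * T & mate s p.1 == Some p.2].

Definition setf (A : Type) (f : {ffun T -> A}) (a : T) (b : A) : {ffun T -> A} :=
  [ffun y => if y == a then b else f y].

(* Scan overline{E_C(w)} (if w is unmatched) for an unmatched x; match (w,x)
   for the first one found.  The returned nat is the number of list entries
   examined. *)
Definition scan (s : state) (w : T) : state * nat :=
  if matched s w then (s, 0%N) else
  let l := nel s w in
  let i := find (fun x => mate s x == None) l in
  if (i < size l)%N then
    let x := nth w l i in
    (State (nel s) (setf (setf (mate s) w (Some x)) x (Some w)), i.+1)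
  else (s, size l).

(* One call of Maintain-Matching(u,v) (only invoked when u,v \in C).
   Cost = 1 (constant work for list/matching updates) + entries scanned. *)
Definition maintain (C : {set T}) (s : state) (a : upd) : state * nat :=
  let u := uu a in let v := uv a in
  if (u \in C) && (v \in C) then
    if uins a then
      (* edge insertion = non-edge deletion *)
      let nl := setf (setf (nel s) u (rem v (nel s u))) v (rem u (nel s v)) in
      let mt := if mate s u == Some v
                then setf (setf (mate s) u None) v None else mate s in
      let r1 := scan (State nl mt) u in
      let r2 := scan r1.1 v in
      (r2.1, (1 + r1.2 + r2.2)%N)
    else
      (* edge deletion = non-edge insertion *)
      let nl := setf (setf (nel s) u (v :: nel s u)) v (u :: nel s v) in
      let mt := if (mate s u == None) && (mate s v == None)
                then setf (setf (mate s) u (Some v)) v (Some u) else mate s in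
      (State nl mt, 1%N)
  else (s, 0%N).

Definition state_at (C : {set T}) (s0 : state) (us : seq upd) (k : nat) : state :=
  foldl (fun s a => (maintain C s a).1) s0 (take k us).


Definition good_initial_state (g0 : rel T) (C : {set T}) (s0 : state) : Prop :=
  (forall w, w \in C -> uniq (nel s0 w) /\ (forall x, (x \in nel s0 w) = (x \in nonnbrs g0 C w)))
  /\ (forall w x, mate s0 w = Some x -> mate s0 x = Some w)
  /\ is_maximal_matching (matchingE s0) (nonedges g0 C).

End MaintainMatching.

(* Main.v *)
Require Import Defs.
From HB Require Import structures.
From mathcomp Require Import all_boot all_order all_algebra.
Import Order.TTheory GRing.Theory Num.Theory.
Set Implicit Arguments. Unset Strict Implicit. Unset Printing Implicit Defensive.

Section Help.
Variable T : finType.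
Implicit Types (g : rel T) (s : state T) (C : {set T}).

Definition msym (m : {ffun T -> option T}) :=
  forall z y, m z = Some y -> m y = Some z.

Lemma setfE (A : Type) (f : {ffun T -> A}) a b y :
  setf f a b y = if y == a then b else f y.
Proof. by rewrite /setf ffunE. Qed.

Lemma add_pair (m : {ffun T -> option T}) w x :
  msym m -> m w = None -> m x = None -> x != w ->
  let m' := setf (setf m w (Some x)) x (Some w) in
  [/\ msym m',
      (forall z, m z != None -> m' z = m z),
      (forall z y, m' z = Some y -> m z = Some y \/ (z = w /\ y = x) \/ (z = x /\ y = w)) &
      m' w = Some x].
Proof.
move=> ms mw mx xw m'.
have wx : (w == x) = false by rewrite eq_sym (negbTE xw).
have E z : m' z = if z == x then Some w else if z == w then Some x else m z.
  by rewrite /m' !setfE.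
split.
- move=> z y; rewrite !E.
  case: (eqVneq z x) => [-> [<-]|zx]; first by rewrite eqxx wx.
  case: (eqVneq z w) => [-> [<-]|zw]; first by rewrite eqxx.
  move=> mz; have my := ms _ _ mz.
  case: (eqVneq y x) => [yx|yx]; first by rewrite yx mx in my.
  case: (eqVneq y w) => [yw|yw]; first by rewrite yw mw in my.
  by [].
- move=> z mz; rewrite E.
  case: (eqVneq z x) => [zx|zx]; first by rewrite zx mx in mz.
  case: (eqVneq z w) => [zw|zw]; first by rewrite zw mw in mz.
  by [].
- move=> z y; rewrite E.
  case: (eqVneq z x) => [-> [<-]|zx]; first by right; right.
  case: (eqVneq z w) => [-> [<-]|zw]; first by right; left.
  by left.
- by rewrite E wx eqxx.
Qed.

Lemma scan_spec s w :
  msym (mate s) -> (forall x, x \in nel s w -> x != w) ->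
  let r := scan s w in
  [/\ nel r.1 = nel s /\ (r.2 <= size (nel s w))%N,
      (forall z, matched s z -> mate r.1 z = mate s z),
      msym (mate r.1),
      (forall z y, mate r.1 z = Some y -> mate s z = Some y \/
          (z = w /\ y \in nel s w) \/ (y = w /\ z \in nel s w)) &
      (forall b, b \in nel s w -> matched r.1 w || matched r.1 b)].
Proof.
move=> ms nw /=; rewrite /scan.
case: ifP => [mw|mw] /=.
  by split=> // [z y ->|b _]; [left | rewrite mw].
set l := nel s w; set i := find _ l.
case: ifP => [il|il] /=.
- set x := nth w l i.
  have xl : x \in l by apply: mem_nth.
  have mx : mate s x = None.
    by apply/eqP; apply: (@nth_find _ w (fun x => mate s x == None)); rewrite has_find.
  have mw' : mate s w = None by apply/eqP; move/negbFE: mw.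
  have [ms' keep orig mw2] := add_pair ms mw' mx (nw _ xl).
  split=> //.
  + by move=> z y /orig [|[[-> ->]|[-> ->]]]; [left|right;left|right;right].
  + by move=> b _; rewrite /matched /= mw2.
- split=> //; first by move=> z y ->; left.
  move=> b bl; apply/orP; right.
  have: ~~ has (fun x => mate s x == None) l by rewrite has_find il.
  by move/hasPn/(_ _ bl).
Qed.

Definition Inv C g s := [/\ (forall x y, g x y = g y x),
  (forall w, w \in C -> uniq (nel s w) /\ nel s w =i nonnbrs g C w),
  msym (mate s),
  (forall w x, mate s w = Some x -> [/\ w \in C, x \in C, x != w & ~~ g w x]) &
  (forall a b, a \in C -> b \in C -> a != b -> ~~ g a b -> matched s a || matched s b)].

Lemma sym_step g a : (forall x y, g x y = g y x) ->
  forall x y, graph_step g a x y = graph_step g a y x.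
Proof.
move=> sg x y; rewrite /graph_step sg; congr (if _ then _ else _).
by apply/orP/orP; case=> /andP[/eqP-> /eqP->]; rewrite !eqxx; by [left|right].
Qed.

Lemma inv_ins C g s u v : Inv C g s -> u != v -> ~~ g u v -> u \in C -> v \in C ->
  Inv C (graph_step g (Upd true u v)) (maintain C s (Upd true u v)).1.
Proof.
move=> [sg nelI ms mI cov] uv guv uC vC.
set g' := graph_step g _.
have sg' : forall x y, g' x y = g' y x by apply: sym_step.
have g'E x y : g' x y = ((x == u) && (y == v)) || ((x == v) && (y == u)) || g x y.
  by rewrite /g' /graph_step /=; case: ifP.
have vu : v != u by rewrite eq_sym.
rewrite /maintain uC vC /=.
set nl := setf _ _ _.
have nlI : forall w, w \in C -> uniq (nl w) /\ nl w =i nonnbrs g' C w.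
  move=> w wC; rewrite /nl !setfE.
  case: (eqVneq w v) => [->|wv].
    have [un mem] := nelI v vC; split; first exact: rem_uniq.
    move=> x; rewrite (mem_rem_uniq _ un) !inE mem !inE g'E eqxx (negbTE vu) /=.
    by case: (eqVneq x u) => [->|xu] /=; rewrite ?andbF.
  case: (eqVneq w u) => [->|wu].
    have [un mem] := nelI u uC; split; first exact: rem_uniq.
    move=> x; rewrite (mem_rem_uniq _ un) !inE mem !inE g'E eqxx (negbTE uv) /=.
    by case: (eqVneq x v) => [->|xv] /=; rewrite ?vC ?uv ?andbF ?orbF.
  have [un mem] := nelI w wC; split=> // x.
  by rewrite mem !inE g'E (negbTE wu) (negbTE wv).
set mt := if _ then _ else _.
have mtE : forall z y, mt z = Some y ->
    mate s z = Some y /\ ~~ [|| (z == u) && (y == v) | (z == v) && (y == u)].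
  move=> z y; rewrite /mt; case: ifP => [/eqP muv|muv].
    rewrite !setfE; case: (eqVneq z v) => [->|zv]; first by rewrite ?eqxx.
    case: (eqVneq z u) => [->|zu]; first by rewrite ?eqxx.
    move=> mz.
    by split=> //; rewrite (negbTE zu) (negbTE zv).
  move=> mz; split=> //; apply/negP => /orP [] /andP [/eqP zu /eqP yv].
    by move: muv; rewrite -zu -yv mz eqxx.
  by move: muv; rewrite -zu -yv (ms _ _ mz) eqxx.
have mtK : forall z, z != u -> z != v -> mt z = mate s z.
  by move=> z zu zv; rewrite /mt; case: ifP => // _; rewrite !setfE (negbTE zu) (negbTE zv).
have mtS : msym mt.
  rewrite /mt; case: ifP => [/eqP muv|_]; last exact: ms.
  move=> z y; rewrite !setfE; case: (eqVneq z v) => [->|zv]; first by rewrite ?eqxx.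
  case: (eqVneq z u) => [->|zu]; first by rewrite ?eqxx.
  move=> mz; have my := ms _ _ mz.
  case: (eqVneq y v) => [yv|yv].
    by move: my; rewrite yv (ms _ _ muv) => -[] /esym /eqP; rewrite (negbTE zu).
  case: (eqVneq y u) => [yu|yu] //.
  by move: my; rewrite yu muv => -[] /esym /eqP; rewrite (negbTE zv).
have inn : forall x y, x \in C -> y \in C -> x != y -> ~~ g' x y -> y \in nl x.
  by move=> x y xC yC xy gxy; rewrite ((nlI x xC).2 y) !inE yC eq_sym xy gxy.
have okp : forall w x, w \in C -> x \in nl w ->
    [/\ w \in C, x \in C, x != w & ~~ g' w x] /\ [/\ x \in C, w \in C, w != x & ~~ g' x w].
  move=> w x wC; rewrite ((nlI w wC).2 x) !inE => /and3P [xC xw gwx].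
  by split; split=> //; rewrite 1?eq_sym // sg'.
have nw : forall w, w \in C -> forall x, x \in nl w -> x != w.
  by move=> w wC x /(okp _ _ wC) [[]].
set s1 := State nl mt.
have [[n1 _] keep1 ms1 orig1 cov1] := scan_spec (s:=s1) (w:=u) mtS (nw u uC).
set r1 := scan s1 u in n1 keep1 ms1 orig1 cov1 *.
have nw' : forall x, x \in nel r1.1 v -> x != v by rewrite n1; exact: nw v vC.
have [[n2 _] keep2 ms2 orig2 cov2] := scan_spec ms1 nw'.
set r2 := scan r1.1 v in n2 keep2 ms2 orig2 cov2 *.
rewrite n1 /= in orig2 cov2.
have mono1 z : matched s1 z -> matched r1.1 z by move=> h; rewrite /matched (keep1 _ h).
have mono2 z : matched r1.1 z -> matched r2.1 z by move=> h; rewrite /matched (keep2 _ h).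
have hu : forall b, b \in nl u -> matched r2.1 u || matched r2.1 b.
  by move=> b /cov1 /orP [] h; apply/orP; [left|right]; apply: mono2.
split=> //.
- by move=> w wC; rewrite n2 n1; exact: nlI.
- move=> z y /orig2 [|[[-> yv]|[-> zv]]]; last 2 first.
  + by case: (okp _ _ vC yv).
  + by case: (okp _ _ vC zv).
  move=> /orig1 [|[[-> yv]|[-> zv]]]; last 2 first.
  + by case: (okp _ _ uC yv).
  + by case: (okp _ _ uC zv).
  move=> /mtE [mz np]; have [zC yC yz gzy] := mI _ _ mz.
  by split=> //; rewrite g'E (negbTE np) /=.
- move=> a b aC bC ab gab.
  case: (eqVneq a u) => [au|au]; first by subst a; apply: hu; apply: inn.
  case: (eqVneq a v) => [av|av]; first by subst a; apply: cov2; apply: inn.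
  case: (eqVneq b u) => [bu|bu].
    by subst b; rewrite orbC; apply: hu; apply: inn; rewrite // 1?eq_sym // sg'.
  case: (eqVneq b v) => [bv|bv].
    by subst b; rewrite orbC; apply: cov2; apply: inn; rewrite // 1?eq_sym // sg'.
  have gab' : ~~ g a b by move: gab; rewrite g'E (negbTE au) (negbTE av).
  by case/orP: (cov _ _ aC bC ab gab') => h; apply/orP; [left|right];
    apply: mono2; apply: mono1; rewrite /matched /= mtK.
Qed.

Lemma inv_del C g s u v : Inv C g s -> u != v -> g u v -> u \in C -> v \in C ->
  Inv C (graph_step g (Upd false u v)) (maintain C s (Upd false u v)).1.
Proof.
move=> [sg nelI ms mI cov] uv guv uC vC.
set g' := graph_step g _.
have sg' : forall x y, g' x y = g' y x by apply: sym_step.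
have g'E x y : g' x y = ~~ [|| (x == u) && (y == v) | (x == v) && (y == u)] && g x y.
  by rewrite /g' /graph_step /=; case: ifP.
have vu : v != u by rewrite eq_sym.
rewrite /maintain uC vC /=.
split=> //.
- move=> w wC; rewrite !setfE.
  case: (eqVneq w v) => [->|wv].
    have [un mem] := nelI v vC; split.
      by rewrite /= un mem !inE sg guv !andbF.
    move=> x; rewrite in_cons mem !inE g'E eqxx (negbTE vu) /=.
    by case: (eqVneq x u) => [->|xu] /=; rewrite ?uC ?uv.
  case: (eqVneq w u) => [->|wu].
    have [un mem] := nelI u uC; split.
      by rewrite /= un mem !inE guv !andbF.
    move=> x; rewrite in_cons mem !inE g'E eqxx (negbTE uv) /= ?andbT.
    by case: (eqVneq x v) => [->|xv] /=; rewrite ?vC ?vu.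
  have [un mem] := nelI w wC; split=> // x.
  by rewrite mem !inE g'E (negbTE wu) (negbTE wv).
- case: ifP => //= /andP [/eqP mu /eqP mv].
  by case: (add_pair ms mu mv vu).
- move=> z y /=.
  have old : mate s z = Some y -> [/\ z \in C, y \in C, y != z & ~~ g' z y].
    by move=> /mI [zC yC yz gzy]; split=> //; rewrite g'E (negbTE gzy) andbF.
  case: ifP => //= /andP [/eqP mu /eqP mv].
  case: (add_pair ms mu mv vu) => _ _ orig _.
  case/orig => [|[[-> ->]|[-> ->]]] //; split=> //; rewrite g'E ?eqxx ?orbT //.
- move=> a b aC bC ab gab.
  have [mu|mu] := boolP ((mate s u == None) && (mate s v == None)).
    case/andP: (mu) => /eqP mu' /eqP mv'.
    case: (add_pair ms mu' mv' vu) => _ keep _ muv.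
    rewrite /matched /=.
    have [pr|npr] := boolP [|| (a == u) && (b == v) | (a == v) && (b == u)].
      by case/orP: pr => /andP [/eqP -> /eqP ->]; rewrite !setfE !eqxx; case: ifP.
    move: gab; rewrite g'E npr /= => /(cov _ _ aC bC ab) /orP [] h; apply/orP;
      [left|right]; rewrite keep //.
  rewrite /matched /= ?(negbTE mu).
  have [pr|npr] := boolP [|| (a == u) && (b == v) | (a == v) && (b == u)].
    move: mu; rewrite negb_and.
    by case/orP: pr => /andP [/eqP -> /eqP ->] h //; rewrite orbC.
  by move: gab; rewrite g'E npr /= => /(cov _ _ aC bC ab).
Qed.

Lemma inv_step C g s a : Inv C g s -> valid_upd g a ->
  Inv C (graph_step g a) (maintain C s a).1.
Proof.
case: a => ins u v inv /andP [uv val]; rewrite /= in uv val *.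
case: (boolP ((u \in C) && (v \in C))) => [/andP [uC vC]|out].
  by case: ins val => gv; [exact: inv_ins | exact: inv_del].
rewrite /maintain (negbTE out) /=.
have gE : forall w x, w \in C -> x \in C -> graph_step g (Upd ins u v) w x = g w x.
  move=> w x wC xC; rewrite /graph_step /=; case: ifP => // /orP [] /andP [/eqP wu /eqP xv];
  by move: out; rewrite -wu -xv wC xC.
case: inv => sg nelI ms mI cov; split=> //.
- exact: sym_step.
- move=> w wC; have [un mem] := nelI w wC; split=> // x.
  by rewrite mem !inE; case xC: (x \in C) => //=; rewrite gE.
- by move=> w x /mI [wC xC xw gwx]; split=> //; rewrite gE.
- by move=> a b aC bC ab; rewrite gE //; exact: cov.
Qed.


Lemma scan_basic s w : nel (scan s w).1 = nel s /\ ((scan s w).2 <= size (nel s w))%N.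
Proof. by rewrite /scan; case: ifP => //; case: ifP. Qed.

Lemma maintain_cost C s a :
  (maintain C s a).2 = 0%N \/
  [/\ uu a \in C, uv a \in C &
     ((maintain C s a).2 <= 1 + size (nel (maintain C s a).1 (uu a))
                            + size (nel (maintain C s a).1 (uv a)))%N].
Proof.
rewrite /maintain; case: ifP => [/andP [uC vC]|_]; last by left.
right; split=> //; case: ifP => _ /=; last by rewrite -addnA leq_addr.
set s1 := State _ _.
have [n1 c1] := scan_basic s1 (uu a).
have [n2 c2] := scan_basic (scan s1 (uu a)).1 (uv a).
rewrite n2 n1 -!addnA leq_add2l; apply: leq_add => //.
by rewrite n1 in c2.
Qed.

Lemma size_nel C g s w : Inv C g s -> w \in C -> size (nel s w) = #|nonnbrs g C w|.
Proof.
case=> _ nelI _ _ _ wC; have [un mem] := nelI w wC.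
by move/card_uniqP: un => <-; apply: eq_card => x; rewrite mem.
Qed.

Lemma card_bigcup_le (I U : finType) (P : pred I) (F : I -> {set U}) :
  (#|\bigcup_(i | P i) F i| <= \sum_(i | P i) #|F i|)%N.
Proof.
elim/big_ind2: _ => [|A1 n1 A2 n2 h1 h2|i _]; first by rewrite cards0.
  by rewrite cardsU; apply: leq_trans (leq_subr _ _) (leq_add h1 h2).
by [].
Qed.

Lemma count_nonedges C g s : Inv C g s ->
  (#|nonedges g C| <= \sum_(w | matched s w) #|nonnbrs g C w|)%N.
Proof.
case=> sg _ _ _ cov.
apply: (@leq_trans (\sum_(w | matched s w) #|[set [set w; x] | x in nonnbrs g C w]|));
  last by apply: leq_sum => w _; apply: leq_imset_card.
apply: (@leq_trans #|\bigcup_(w | matched s w) [set [set w; x] | x in nonnbrs g C w]|);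
  last exact: card_bigcup_le.
  apply: subset_leq_card; apply/subsetP => e /imset2P [x y xC].
  rewrite inE => /and3P [yC xy gxy] ->.
  case/orP: (cov _ _ xC yC xy gxy) => mx; apply/bigcupP.
    by exists x => //; apply/imsetP; exists y => //; rewrite !inE yC eq_sym xy.
  exists y => //; apply/imsetP; exists x; last by rewrite setUC.
  by rewrite !inE xC xy sg.
Qed.

Lemma count_matched C g s : Inv C g s ->
  (#|[set w | matched s w]| <= 2 * #|matchingE s|)%N.
Proof.
case=> _ _ ms _ _.
apply: (@leq_trans #|\bigcup_(e | e \in matchingE s) e|).
  apply: subset_leq_card; apply/subsetP => w; rewrite inE /matched.
  case mw: (mate s w) => [x|] // _; apply/bigcupP; exists [set w; x].
    by apply/imsetP; exists (w, x); rewrite ?inE /= ?mw.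
  by rewrite !inE eqxx.
apply: (@leq_trans (\sum_(e | e \in matchingE s) #|e|)); first exact: card_bigcup_le.
apply: (@leq_trans (\sum_(e in matchingE s) 2)%N).
  by apply: leq_sum => e /imsetP [p _ ->]; rewrite cards2; case: (_ != _).
by rewrite sum_nat_const mulnC.
Qed.

Lemma inv_max C g s : Inv C g s -> is_maximal_matching (matchingE s) (nonedges g C).
Proof.
case=> sg _ ms mI cov.
have inM w x : mate s w = Some x -> [set w; x] \in matchingE s.
  by move=> mw; apply/imsetP; exists (w, x); rewrite ?inE /= ?mw.
have atz p1 p2 z : mate s p1 = Some p2 -> z \in [set p1; p2] ->
    exists2 z', mate s z = Some z' & [set p1; p2] = [set z; z'].
  move=> m1; case/set2P => ->; first by exists p2.
  by exists p1; [apply: ms | rewrite setUC].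
split; [split|].
- apply/subsetP => e /imsetP [[w x]]; rewrite inE /= => /eqP mw ->.
  have [wC xC xw gwx] := mI _ _ mw.
  by apply: imset2_f => //; rewrite !inE xC eq_sym xw gwx.
- move=> e f /imsetP [[p1 p2]]; rewrite inE /= => /eqP m1 ->.
  move=> /imsetP [[q1 q2]]; rewrite inE /= => /eqP m2 -> ef.
  rewrite -setI_eq0; apply/eqP/setP => z; rewrite in_setI in_set0.
  apply/negP => /andP [z1 z2].
  have [z' mz e1] := atz _ _ _ m1 z1.
  have [z'' mz' e2] := atz _ _ _ m2 z2.
  move: mz; rewrite mz' => -[zz].
  by move: ef; rewrite e1 e2 zz eqxx.
- move=> e /imset2P [x y xC]; rewrite inE => /and3P [yC xy gxy] ->.
  case/orP: (cov _ _ xC yC xy gxy); rewrite /matched.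
    case mx: (mate s x) => [x'|] // _; exists [set x; x']; first exact: inM.
    by rewrite -setI_eq0; apply/set0Pn; exists x; rewrite !inE !eqxx.
  case my: (mate s y) => [y'|] // _; exists [set y; y']; first exact: inM.
  by rewrite -setI_eq0; apply/set0Pn; exists y; rewrite !inE !eqxx ?orbT.
Qed.
End Help.

From mathcomp Require Import ring lra.
Unset Implicit Arguments.
Local Open Scope ring_scope.

Theorem lemma12 :
  exists c : nat,
  forall (R : realFieldType) (T : finType) (eps : R) (Delta : nat)
         (C : {set T}) (g0 : rel T) (us : seq (upd T)) (s0 : state T),
    0 < eps < 1 ->
    simple_graph g0 ->
    (* a fully dynamic graph of maximum degree at most Delta *)
    (forall us1 a us2, us = us1 ++ a :: us2 ->
       valid_upd (foldl (@graph_step T) g0 us1) a) ->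
    (forall k, (k <= size us)%N -> max_deg_le (graph_at g0 us k) Delta) ->
    (* the (high-probability) event: every vertex of C has at most
       5 eps Delta non-neighbours in C throughout the phase *)
    (forall k w, (k <= size us)%N -> w \in C ->
       (#|nonnbrs (graph_at g0 us k) C w|)%:R <= 5 * eps * Delta%:R) ->
    (* start of the phase: correct lists and a maximal matching M_N *)
    good_initial_state g0 C s0 ->
    (* time per update is O(eps Delta) *)
    (forall us1 a us2, us = us1 ++ a :: us2 ->
       ((maintain C (state_at C s0 us (size us1)) a).2)%:R
         <= c%:R * (eps * Delta%:R + 1)) /\
    (* M_N is a maximal matching of (C, nonedges) of the stated size *)
    (forall k, (k <= size us)%N ->
       is_maximal_matching (matchingE (state_at C s0 us k))
                           (nonedges (graph_at g0 us k) C) /\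
       (#|nonedges (graph_at g0 us k) C|)%:R / (20 * eps * Delta%:R)
         <= (#|matchingE (state_at C s0 us k)|)%:R).
Proof.
exists 10%N.
move=> R T eps Delta C g0 us s0 /andP [e0 e1] [irr sg0] valid _ nnb [nel0 [ms0 mm0]].
have inv0 : Inv C g0 s0.
  case: mm0 => [[sub _] maxi].
  split.
  - exact: sg0.
  - move=> w wC; have [un m] := nel0 w wC; split => // x; exact: m.
  - exact: ms0.
  - move=> w x mw.
    have : [set w; x] \in nonedges g0 C.
      by apply: (subsetP sub); apply/imsetP; exists (w, x); rewrite ?inE /= ?mw.
    case/imset2P => a b aC; rewrite inE => /and3P [bC ab gab] E.
    have wab : w \in [set a; b] by rewrite -E !inE eqxx.
    have xab : x \in [set a; b] by rewrite -E !inE eqxx orbT.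
    have xw : x != w.
      apply/negP => /eqP xw; subst x; move: E; rewrite setUid => E.
      move: (set21 a b) (set22 a b); rewrite -E !inE => /eqP ea /eqP eb.
      by rewrite ea eb eqxx in ab.
    case/set2P: wab => ?; case/set2P: xab => ?; subst; rewrite ?eqxx // in xw;
      split; try done; first [by rewrite eq_sym | by rewrite sg0 | idtac].
  - move=> a b aC bC ab gab.
    have : [set a; b] \in nonedges g0 C by apply: imset2_f => //; rewrite !inE bC ab /=.
    case/maxi => f /imsetP [[p1 p2]]; rewrite inE /= => /eqP m1 ->.
    rewrite -setI_eq0 => /set0Pn [z]; rewrite in_setI => /andP [zab zp].
    have mz : matched s0 z.
      rewrite /matched; case/set2P: zp => ->; first by rewrite m1.
      by rewrite (ms0 _ _ m1).
    by case/set2P: zab => <-; rewrite mz ?orbT.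
have invk : forall k, (k <= size us)%N -> Inv C (graph_at g0 us k) (state_at C s0 us k).
  elim=> [|k IH] hk; first by rewrite /graph_at /state_at take0.
  have hk' : (k < size us)%N by [].
  have {IH} IH := IH (ltnW hk).
  have [a0 _] : exists a : upd T, True.
    by case: (us) hk' => [//|a ?]; exists a.
  rewrite /graph_at /state_at (take_nth a0 hk') !foldl_rcons.
  apply: inv_step; first exact: IH.
  by apply: (valid (take k us) _ (drop k.+1 us)); rewrite -drop_nth // cat_take_drop.
split.
- move=> us1 a us2 E.
  have hs : (size us1 < size us)%N by rewrite E size_cat /= addnS ltnS leq_addr.
  have I1 := invk (size us1) (ltnW hs).
  rewrite /graph_at /state_at E take_size_cat // in I1 *.
  have I2 := inv_step I1 (valid us1 a us2 E).
  have nb w : w \in C -> (#|nonnbrs (graph_step (foldl (@graph_step T) g0 us1) a) C w|)%:R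
      <= 5 * eps * Delta%:R.
    move=> wC; have := nnb (size us1).+1 w hs wC.
    by rewrite /graph_at E take_cat ltnNge leqnSn /= subSnn /= foldl_cat take0.
  have tp : 0 <= eps * Delta%:R by apply: mulr_ge0; [apply: ltW|apply: ler0n].
  case: (maintain_cost C (foldl (fun s a => (maintain C s a).1) s0 us1) a) => [->|[uC vC hc]].
    by rewrite mulr_ge0 // addr_ge0.
  rewrite (size_nel I2 uC) (size_nel I2 vC) in hc.
  have := nb _ uC; have := nb _ vC.
  move: hc; rewrite -(ler_nat R) !natrD.
  by lra.
- move=> k hk; have I := invk k hk; split; first exact: inv_max.
  have h1 := count_nonedges I; have h2 := count_matched I.
  set N := #|nonedges _ _| in h1 *; set M := #|matchingE _| in h2 *.
  set Mv := #|[set w | matched _ w]| in h2.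
  have tp : 0 <= eps * Delta%:R by apply: mulr_ge0; [apply: ltW|apply: ler0n].
  have hN : N%:R <= (5 * eps * Delta%:R) *+ Mv.
    apply: (le_trans (y := (\sum_(w | matched (state_at C s0 us k) w)
                              #|nonnbrs (graph_at g0 us k) C w|)%:R)).
      by rewrite ler_nat.
    rewrite natr_sum.
    apply: (le_trans (y := \sum_(w | matched (state_at C s0 us k) w) (5 * eps * Delta%:R))).
      apply: ler_sum => w; rewrite /matched; case mw: (mate _ w) => [x|] // _.
      case: I => _ _ _ mI _; have [wC _ _ _] := mI _ _ mw.
      exact: nnb.
    rewrite (eq_bigl (fun w => w \in [set w | matched (state_at C s0 us k) w])); last first.
      by move=> w; rewrite inE.
    by rewrite sumr_const.
  have {}hN : N%:R <= Mv%:R * (5 * eps * Delta%:R) by rewrite mulr_natl.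
  have hM : Mv%:R <= 2 * M%:R :> R by rewrite -natrM ler_nat.
  case: (posnP Delta) => [D0|Dp].
    by rewrite D0 mulr0 invr0 mulr0 ler0n.
  have dp : 0 < 20 * eps * Delta%:R by rewrite !mulr_gt0 // ltr0n.
  rewrite ler_pdivrMr //.
  have M0 : 0 <= M%:R :> R by apply: ler0n.
  have Mv0 : 0 <= Mv%:R :> R by apply: ler0n.
  nra.
Qed.
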